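(* For every positive integer $k$ and every cell $c$ of the Aztec diamond $\operatorname{AD}(3k-2)$, the set $\operatorname{AD}(3k-2)\setminus\{c\}$ can be partitioned into L-trominoes (i.e. $\operatorname{AD}(3k-2)$ with one defect has a cover).
   Context: A cell is a unit square $[i,i+1]\times[j,j+1]$ with $i,j\in\mathbb{Z}$. An L-tromino is a set of three cells equal to a $2\times 2$ block of cells with one cell removed. The Aztec diamond $\operatorname{AD}(n)$ is the union of the cells $[a,a+1]\times[b,b+1]$, $a,b\in\mathbb{Z}$, lying completely inside $\{(x,y): |x|+|y|\le n+1\}$. *)

(* Defs.v *)
From Stdlib Require Import ZArith List.
Open Scope Z_scope.

(* The cell [a,a+1] x [b,b+1] is represented by its lower-left corner (a,b). *)
Definition cell := (Z * Z)%type.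

(* The cell (a,b) lies completely inside {(x,y) : |x|+|y| <= n+1} iff all four
   corners do, i.e. max(|a|,|a+1|) + max(|b|,|b+1|) <= n+1. *)
Definition in_AD (n : nat) (c : cell) : Prop :=
  Z.max (Z.abs (fst c)) (Z.abs (fst c + 1)) + Z.max (Z.abs (snd c)) (Z.abs (snd c + 1))
  <= Z.of_nat n + 1.

Definition in_block (i j : Z) (p : cell) : Prop :=
  (fst p = i \/ fst p = i + 1) /\ (snd p = j \/ snd p = j + 1).

Definition is_L_tromino (S : cell -> Prop) : Prop :=
  exists (i j : Z) (r : cell), in_block i j r /\
    forall p, S p <-> (in_block i j p /\ p <> r).

Definition L_tromino_partition (X : cell -> Prop) : Prop :=
  exists T : list (cell -> Prop),
    Forall is_L_tromino T /\
    (forall p, X p <-> exists t, In t T /\ t p) /\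
    (forall (i j : nat) (p : cell), (i < j < length T)%nat ->
        ~ (nth i T (fun _ => False) p /\ nth j T (fun _ => False) p)).

(* Main.v *)
Require Import Defs.
From Stdlib Require Import ZArith List Lia Bool.
Import ListNotations.
Open Scope Z_scope.

Definition tileable := L_tromino_partition.

Lemma tile_ext (X Y : cell -> Prop) :
  (forall p, X p <-> Y p) -> tileable X -> tileable Y.
Proof.
  intros H [T [HF [HC HD]]]. exists T. split; [exact HF|split; [|exact HD]].
  intro p. rewrite <- H. apply HC.
Qed.

Lemma tile_union (X Y : cell -> Prop) :
  tileable X -> tileable Y -> (forall p, X p -> Y p -> False) ->
  tileable (fun p => X p \/ Y p).
Proof.
  intros [T1 [F1 [C1 D1]]] [T2 [F2 [C2 D2]]] Hd.
  exists (T1 ++ T2). split; [apply Forall_app; auto|split].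
  - intro p. rewrite C1, C2. split.
    + intros [[t [Ht Hp]]|[t [Ht Hp]]]; exists t; split; auto; apply in_or_app; auto.
    + intros [t [Ht Hp]]. apply in_app_or in Ht as [Ht|Ht]; [left|right]; eauto.
  - intros i j p Hij [Hi Hj]. rewrite length_app in Hij.
    destruct (Nat.lt_ge_cases j (length T1)) as [Hj1|Hj1].
    + rewrite app_nth1 in Hi by lia. rewrite app_nth1 in Hj by lia.
      apply (D1 i j p); [lia|auto].
    + destruct (Nat.lt_ge_cases i (length T1)) as [Hi1|Hi1].
      * rewrite app_nth1 in Hi by lia. rewrite app_nth2 in Hj by lia.
        apply (Hd p).
        -- apply C1. exists (nth i T1 (fun _ => False)). split; auto. apply nth_In; lia.
        -- apply C2. exists (nth (j - length T1)%nat T2 (fun _ => False)). split; auto. apply nth_In; lia.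
      * rewrite app_nth2 in Hi by lia. rewrite app_nth2 in Hj by lia.
        apply (D2 (i - length T1)%nat (j - length T1)%nat p); [lia|auto].
Qed.

Lemma tile_map (f : cell -> cell) (X : cell -> Prop) :
  (forall t, is_L_tromino t -> is_L_tromino (fun p => t (f p))) ->
  tileable X -> tileable (fun p => X (f p)).
Proof.
  intros Hf [T [F1 [C1 D1]]].
  exists (map (fun t p => t (f p)) T). split; [|split].
  - apply Forall_map. eapply Forall_impl; [|exact F1]. intros t Ht. apply Hf, Ht.
  - intro p. rewrite C1. split.
    + intros [t [Ht Hp]]. exists (fun p => t (f p)). split; auto. apply in_map_iff. eauto.
    + intros [t [Ht Hp]]. apply in_map_iff in Ht as [t0 [<- Ht0]]. eauto.
  - intros i j p Hij. rewrite length_map in Hij.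
    rewrite (map_nth (fun t p => t (f p)) T (fun _ => False) i).
    rewrite (map_nth (fun t p => t (f p)) T (fun _ => False) j).
    apply (D1 i j (f p)). exact Hij.
Qed.

Definition shift (u v : Z) (p : cell) : cell := (fst p - u, snd p - v).
Definition rinv (p : cell) : cell := (snd p, - fst p - 1).

Lemma pair_neq (a b c d : Z) : (a, b) <> (c, d) <-> ~ (a = c /\ b = d).
Proof. split.
  - intros H1 [H2 H3]; subst; auto.
  - intros H1 H2; apply H1; inversion H2; auto. Qed.

Lemma tile_shift u v X : tileable X -> tileable (fun p => X (shift u v p)).
Proof.
  apply tile_map. intros t [i [j [r [Hr Ht]]]].
  exists (i+u), (j+v), (fst r + u, snd r + v). destruct r as [r1 r2].
  unfold in_block in *; simpl in *. split; [lia|].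
  intros [a b]. rewrite Ht. unfold shift, in_block; simpl.
  rewrite !pair_neq. lia.
Qed.

Lemma tile_rinv X : tileable X -> tileable (fun p => X (rinv p)).
Proof.
  apply tile_map. intros t [i [j [r [Hr Ht]]]].
  exists (-j-2), i, (- snd r - 1, fst r). destruct r as [r1 r2].
  unfold in_block in *; simpl in *. split; [lia|].
  intros [a b]. rewrite Ht. unfold rinv, in_block; simpl.
  rewrite !pair_neq. lia.
Qed.
Definition spec := (Z * Z * cell)%type.
Definition tile_of (s : spec) : cell -> Prop :=
  fun p => in_block (fst (fst s)) (snd (fst s)) p /\ p <> snd s.
Definition inb (i j : Z) (p : cell) : bool :=
  ((fst p =? i) || (fst p =? i+1)) && ((snd p =? j) || (snd p =? j+1)).
Definition ceqb (p q : cell) : bool := (fst p =? fst q) && (snd p =? snd q).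
Definition memb (s : spec) (p : cell) : bool :=
  inb (fst (fst s)) (snd (fst s)) p && negb (ceqb p (snd s)).
Definition wfb (s : spec) : bool := inb (fst (fst s)) (snd (fst s)) (snd s).
Definition cells_of (s : spec) : list cell :=
  let i := fst (fst s) in let j := snd (fst s) in
  [(i,j);(i+1,j);(i,j+1);(i+1,j+1)].

Lemma inb_spec i j p : inb i j p = true <-> in_block i j p.
Proof. unfold inb, in_block. rewrite andb_true_iff, !orb_true_iff, !Z.eqb_eq. reflexivity. Qed.
Lemma ceqb_spec p q : ceqb p q = true <-> p = q.
Proof. destruct p, q. unfold ceqb; simpl. rewrite andb_true_iff, !Z.eqb_eq.
  split; [intros [-> ->]; auto|intro H; inversion H; auto]. Qed.
Lemma memb_spec s p : memb s p = true <-> tile_of s p.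
Proof. unfold memb, tile_of. rewrite andb_true_iff, inb_spec, negb_true_iff.
  rewrite <- not_true_iff_false, ceqb_spec. tauto. Qed.
Lemma wfb_tromino s : wfb s = true -> is_L_tromino (tile_of s).
Proof. intro H. exists (fst (fst s)), (snd (fst s)), (snd s). split.
  - apply inb_spec, H.
  - intro; unfold tile_of; tauto. Qed.
Lemma tile_in_cells s p : tile_of s p -> In p (cells_of s).
Proof. destruct s as [[i j] r]. unfold tile_of, in_block, cells_of; simpl.
  destruct p as [a b]; simpl. intros [[[-> | ->] [-> | ->]] _]; tauto. Qed.

Definition cnt (p : cell) (L : list spec) : nat := length (filter (fun s => memb s p) L).

Definition check (f : cell -> bool) (B : list cell) (L : list spec) : bool :=
  forallb wfb L &&
  forallb (fun s => forallb (fun q => negb (memb s q) || existsb (ceqb q) B) (cells_of s)) L &&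
  forallb (fun p => if f p then Nat.eqb (cnt p L) 1 else Nat.eqb (cnt p L) 0) B.

Lemma cnt_ge1 p L s : In s L -> memb s p = true -> (1 <= cnt p L)%nat.
Proof. intros Hin Hm. unfold cnt. destruct (filter (fun s => memb s p) L) eqn:E; simpl; [|lia].
  assert (In s (filter (fun s => memb s p) L)) by (apply filter_In; auto). rewrite E in H; inversion H. Qed.

Lemma cnt_ge2 p L : forall i j d, (i < j < length L)%nat -> memb (nth i L d) p = true ->
  memb (nth j L d) p = true -> (2 <= cnt p L)%nat.
Proof.
  induction L as [|s L IH]; intros i j d Hij Hi Hj; simpl in *; [lia|].
  unfold cnt; simpl. destruct i as [|i].
  - rewrite Hi. simpl. destruct j as [|j]; [lia|].
    assert (1 <= cnt p L)%nat; [|unfold cnt in *; lia].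
    apply (cnt_ge1 p L (nth j L d)); auto. apply nth_In; lia.
  - destruct j as [|j]; [lia|]. assert (2 <= cnt p L)%nat by (apply (IH i j d); auto; lia).
    unfold cnt in *. destruct (memb s p); simpl; lia.
Qed.

Lemma check_sound f B L : (forall p, f p = true -> In p B) -> check f B L = true ->
  tileable (fun p => f p = true).
Proof.
  intros HB Hc. unfold check in Hc. rewrite !andb_true_iff in Hc.
  destruct Hc as [[H1 H2] H3]. rewrite forallb_forall in H1, H2, H3.
  assert (Hout : forall p s, In s L -> memb s p = true -> In p B).
  { intros p s Hs Hm. specialize (H2 s Hs). rewrite forallb_forall in H2.
    specialize (H2 p (tile_in_cells s p (proj1 (memb_spec s p) Hm))).
    rewrite Hm in H2. simpl in H2. apply existsb_exists in H2 as [q [Hq Hq2]].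
    apply ceqb_spec in Hq2. subst; auto. }
  exists (map tile_of L). split; [|split].
  - apply Forall_map, Forall_forall. intros s Hs. apply wfb_tromino, H1, Hs.
  - intro p. split.
    + intro Hf. specialize (H3 p (HB p Hf)). rewrite Hf in H3. apply Nat.eqb_eq in H3.
      unfold cnt in H3. destruct (filter (fun s => memb s p) L) as [|s l] eqn:E; [discriminate|].
      assert (In s (filter (fun s => memb s p) L)) by (rewrite E; left; auto).
      apply filter_In in H as [Hs Hm]. exists (tile_of s). split; [apply in_map; auto|apply memb_spec; auto].
    + intros [t [Ht Hp]]. apply in_map_iff in Ht as [s [<- Hs]]. apply memb_spec in Hp.
      pose proof (Hout p s Hs Hp) as HpB. specialize (H3 p HpB).
      destruct (f p); auto. apply Nat.eqb_eq in H3. pose proof (cnt_ge1 p L s Hs Hp). lia.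
  - intros i j p Hij [Hi Hj]. rewrite length_map in Hij.
    assert (E : forall k, (k < length L)%nat -> nth k (map tile_of L) (fun _ => False) = tile_of (nth k L (0,0,(0,0)))).
    { intros k Hk. rewrite (nth_indep _ _ (tile_of (0,0,(0,0)))) by (rewrite length_map; auto).
      apply map_nth. }
    rewrite E in Hi, Hj by lia. apply memb_spec in Hi, Hj.
    pose proof (Hout p _ (nth_In L (0,0,(0,0)) (proj2 Hij)) Hj) as HpB.
    pose proof (cnt_ge2 p L i j _ Hij Hi Hj). specialize (H3 p HpB).
    destruct (f p); apply Nat.eqb_eq in H3; lia.
Qed.

Definition zrange (lo : Z) (n : nat) : list Z := map (fun k => lo + Z.of_nat k) (seq 0 n).
Lemma in_zrange lo n a : lo <= a < lo + Z.of_nat n -> In a (zrange lo n).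
Proof. intro H. unfold zrange. apply in_map_iff. exists (Z.to_nat (a - lo)). split; [lia|].
  apply in_seq. lia. Qed.
Definition box (x0 y0 : Z) (w h : nat) : list cell := list_prod (zrange x0 w) (zrange y0 h).
Lemma in_box x0 y0 w h p : x0 <= fst p < x0 + Z.of_nat w -> y0 <= snd p < y0 + Z.of_nat h ->
  In p (box x0 y0 w h).
Proof. destruct p; intros; apply in_prod; apply in_zrange; simpl in *; lia. Qed.
Definition table1 : list (cell * list spec) := [
  (((-1),(-1)),[((-1),(-1),((-1),(-1)))]);
  (((-1),(0)),[((-1),(-1),((-1),(0)))]);
  (((0),(-1)),[((-1),(-1),((0),(-1)))]);
  (((0),(0)),[((-1),(-1),((0),(0)))])].

Definition table4 : list (cell * list spec) := [
  (((-4),(-1)),[((-4),(0),((-4),(1)));((-3),(-2),((-2),(-2)));((-2),(-3),((-1),(-3)));((-2),(0),((-1),(0)));((-2),(2),((-2),(3)));((-1),(-4),((0),(-3)));((-1),(-1),((0),(-1)));((0),(-3),((0),(-2)));((0),(-2),((1),(-2)));((0),(0),((0),(0)));((0),(2),((1),(3)));((2),(-2),((3),(-2)));((2),(0),((3),(1)))]);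
  (((-4),(0)),[((-4),(-1),((-4),(0)));((-3),(-2),((-3),(-1)));((-3),(1),((-3),(2)));((-2),(-3),((-2),(-2)));((-2),(0),((-2),(1)));((-1),(-4),((-1),(-3)));((-1),(-1),((-1),(0)));((-1),(2),((0),(2)));((0),(-3),((0),(-3)));((0),(1),((1),(1)));((1),(-2),((1),(-2)));((1),(0),((2),(0)));((2),(-1),((2),(-1)))]);
  (((-3),(-2)),[((-4),(-1),((-3),(-1)));((-3),(-1),((-3),(0)));((-3),(1),((-3),(2)));((-2),(-3),((-1),(-3)));((-1),(-4),((0),(-3)));((-1),(-1),((0),(-1)));((-1),(1),((-1),(2)));((-1),(2),((0),(2)));((0),(-3),((1),(-2)));((0),(-1),((0),(0)));((1),(-2),((1),(-1)));((1),(1),((2),(2)));((2),(-1),((2),(-1)))]);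
  (((-3),(-1)),[((-4),(-1),((-3),(-1)));((-3),(-2),((-3),(-1)));((-3),(1),((-3),(2)));((-2),(-3),((-2),(-2)));((-2),(0),((-2),(1)));((-1),(-4),((-1),(-3)));((-1),(-1),((-1),(0)));((-1),(2),((0),(2)));((0),(-3),((0),(-3)));((0),(1),((1),(1)));((1),(-2),((1),(-2)));((1),(0),((2),(0)));((2),(-1),((2),(-1)))]);
  (((-3),(0)),[((-4),(-1),((-3),(0)));((-3),(-2),((-3),(-1)));((-3),(1),((-3),(2)));((-2),(-3),((-2),(-2)));((-2),(0),((-2),(1)));((-1),(-4),((-1),(-3)));((-1),(-1),((-1),(0)));((-1),(2),((0),(2)));((0),(-3),((0),(-3)));((0),(1),((1),(1)));((1),(-2),((1),(-2)));((1),(0),((2),(0)));((2),(-1),((2),(-1)))]);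
  (((-3),(1)),[((-4),(-1),((-3),(-1)));((-3),(-2),((-2),(-2)));((-2),(-3),((-1),(-3)));((-2),(0),((-1),(0)));((-2),(2),((-2),(3)));((-1),(-4),((0),(-3)));((-1),(-1),((0),(-1)));((0),(-3),((0),(-2)));((0),(-2),((1),(-2)));((0),(0),((0),(0)));((0),(2),((1),(3)));((2),(-2),((3),(-2)));((2),(0),((3),(1)))]);
  (((-2),(-3)),[((-4),(-1),((-3),(-1)));((-3),(-2),((-2),(-2)));((-3),(1),((-3),(2)));((-2),(-2),((-2),(-1)));((-2),(0),((-2),(1)));((-1),(-4),((0),(-3)));((-1),(2),((0),(2)));((0),(-3),((0),(-2)));((0),(-2),((1),(-2)));((0),(0),((0),(1)));((0),(1),((1),(1)));((2),(-2),((3),(-2)));((2),(0),((3),(1)))]);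
  (((-2),(-2)),[((-4),(-1),((-3),(-1)));((-3),(-2),((-2),(-2)));((-3),(1),((-3),(2)));((-2),(-3),((-2),(-2)));((-2),(0),((-2),(1)));((-1),(-4),((-1),(-3)));((-1),(-1),((-1),(0)));((-1),(2),((0),(2)));((0),(-3),((0),(-3)));((0),(1),((1),(1)));((1),(-2),((1),(-2)));((1),(0),((2),(0)));((2),(-1),((2),(-1)))]);
  (((-2),(-1)),[((-4),(-1),((-3),(-1)));((-3),(-2),((-2),(-1)));((-3),(1),((-3),(2)));((-2),(-3),((-2),(-2)));((-2),(0),((-2),(1)));((-1),(-4),((-1),(-3)));((-1),(-1),((-1),(0)));((-1),(2),((0),(2)));((0),(-3),((0),(-3)));((0),(1),((1),(1)));((1),(-2),((1),(-2)));((1),(0),((2),(0)));((2),(-1),((2),(-1)))]);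
  (((-2),(0)),[((-4),(-1),((-3),(-1)));((-3),(-2),((-2),(-2)));((-3),(1),((-3),(2)));((-2),(-3),((-1),(-3)));((-1),(-4),((0),(-3)));((-1),(-1),((0),(-1)));((-1),(1),((-1),(2)));((-1),(2),((0),(2)));((0),(-3),((1),(-2)));((0),(-1),((0),(0)));((1),(-2),((1),(-1)));((1),(1),((2),(2)));((2),(-1),((2),(-1)))]);
  (((-2),(1)),[((-4),(-1),((-3),(0)));((-3),(-2),((-3),(-1)));((-3),(0),((-2),(1)));((-2),(-3),((-2),(-2)));((-2),(2),((-2),(3)));((-1),(-4),((-1),(-3)));((-1),(-1),((-1),(0)));((-1),(0),((0),(0)));((0),(-3),((0),(-3)));((0),(2),((1),(3)));((1),(-2),((1),(-2)));((1),(0),((2),(0)));((2),(-1),((2),(-1)))]);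
  (((-2),(2)),[((-4),(-1),((-3),(-1)));((-3),(-2),((-2),(-2)));((-3),(0),((-3),(0)));((-2),(-3),((-1),(-3)));((-1),(-4),((0),(-3)));((-1),(-1),((0),(-1)));((-1),(1),((-1),(2)));((-1),(2),((0),(2)));((0),(-3),((1),(-2)));((0),(-1),((0),(0)));((1),(-2),((1),(-1)));((1),(1),((2),(2)));((2),(-1),((2),(-1)))]);
  (((-1),(-4)),[((-4),(-1),((-3),(-1)));((-3),(-2),((-2),(-2)));((-3),(1),((-3),(2)));((-2),(-3),((-1),(-3)));((-2),(0),((-2),(1)));((-1),(-4),((-1),(-4)));((-1),(-1),((-1),(0)));((-1),(2),((0),(2)));((0),(-3),((0),(-3)));((0),(1),((1),(1)));((1),(-2),((1),(-2)));((1),(0),((2),(0)));((2),(-1),((2),(-1)))]);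
  (((-1),(-3)),[((-4),(-1),((-3),(-1)));((-3),(-2),((-2),(-2)));((-3),(1),((-3),(2)));((-2),(-3),((-1),(-3)));((-2),(0),((-2),(1)));((-1),(-4),((-1),(-3)));((-1),(-1),((-1),(0)));((-1),(2),((0),(2)));((0),(-3),((0),(-3)));((0),(1),((1),(1)));((1),(-2),((1),(-2)));((1),(0),((2),(0)));((2),(-1),((2),(-1)))]);
  (((-1),(-2)),[((-4),(-1),((-3),(-1)));((-3),(-2),((-2),(-2)));((-3),(1),((-3),(2)));((-2),(-3),((-1),(-2)));((-2),(0),((-2),(1)));((-1),(-4),((-1),(-3)));((-1),(-1),((-1),(0)));((-1),(2),((0),(2)));((0),(-3),((0),(-3)));((0),(1),((1),(1)));((1),(-2),((1),(-2)));((1),(0),((2),(0)));((2),(-1),((2),(-1)))]);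
  (((-1),(-1)),[((-4),(-1),((-3),(-1)));((-3),(-2),((-2),(-2)));((-3),(1),((-3),(2)));((-2),(-3),((-1),(-3)));((-2),(0),((-2),(1)));((-1),(-4),((0),(-3)));((-1),(2),((0),(2)));((0),(-3),((0),(-2)));((0),(-2),((1),(-2)));((0),(0),((0),(1)));((0),(1),((1),(1)));((2),(-2),((3),(-2)));((2),(0),((3),(1)))]);
  (((-1),(0)),[((-4),(-1),((-3),(-1)));((-3),(-2),((-2),(-2)));((-3),(0),((-3),(0)));((-2),(-3),((-1),(-3)));((-2),(2),((-2),(3)));((-1),(-4),((0),(-3)));((-1),(-2),((-1),(-2)));((-1),(0),((-1),(0)));((0),(-3),((0),(-2)));((0),(2),((1),(3)));((1),(-2),((1),(-2)));((1),(0),((2),(0)));((2),(-1),((2),(-1)))]);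
  (((-1),(1)),[((-4),(-1),((-3),(-1)));((-3),(-2),((-2),(-2)));((-3),(1),((-3),(2)));((-2),(-3),((-1),(-3)));((-2),(-1),((-2),(-1)));((-1),(-4),((0),(-3)));((-1),(2),((0),(2)));((0),(-3),((0),(-2)));((0),(-2),((1),(-2)));((0),(0),((0),(1)));((0),(1),((1),(1)));((2),(-2),((3),(-2)));((2),(0),((3),(1)))]);
  (((-1),(2)),[((-4),(-1),((-3),(-1)));((-3),(-2),((-2),(-2)));((-3),(1),((-3),(2)));((-2),(-3),((-1),(-3)));((-2),(0),((-2),(1)));((-1),(-4),((0),(-3)));((-1),(-1),((-1),(0)));((-1),(2),((-1),(2)));((0),(-3),((1),(-2)));((0),(1),((0),(2)));((1),(-2),((2),(-1)));((1),(0),((1),(1)));((2),(-1),((2),(0)))]);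
  (((-1),(3)),[((-4),(-1),((-3),(-1)));((-3),(-2),((-2),(-2)));((-3),(1),((-3),(2)));((-2),(-3),((-1),(-3)));((-2),(0),((-2),(1)));((-1),(-4),((0),(-3)));((-1),(-1),((-1),(0)));((-1),(2),((-1),(3)));((0),(-3),((1),(-2)));((0),(1),((0),(2)));((1),(-2),((2),(-1)));((1),(0),((1),(1)));((2),(-1),((2),(0)))]);
  (((0),(-4)),[((-4),(-1),((-3),(-1)));((-3),(-2),((-2),(-2)));((-3),(1),((-3),(2)));((-2),(-3),((-1),(-3)));((-2),(0),((-2),(1)));((-1),(-4),((0),(-4)));((-1),(-1),((-1),(0)));((-1),(2),((0),(2)));((0),(-3),((0),(-3)));((0),(1),((1),(1)));((1),(-2),((1),(-2)));((1),(0),((2),(0)));((2),(-1),((2),(-1)))]);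
  (((0),(-3)),[((-4),(-1),((-3),(-1)));((-3),(-2),((-2),(-2)));((-3),(1),((-3),(2)));((-2),(-3),((-1),(-3)));((-2),(0),((-2),(1)));((-1),(-4),((0),(-3)));((-1),(-1),((-1),(0)));((-1),(2),((0),(2)));((0),(-3),((0),(-3)));((0),(1),((1),(1)));((1),(-2),((1),(-2)));((1),(0),((2),(0)));((2),(-1),((2),(-1)))]);
  (((0),(-2)),[((-4),(-1),((-3),(-1)));((-3),(-2),((-2),(-2)));((-3),(1),((-3),(2)));((-2),(-3),((-1),(-3)));((-2),(0),((-2),(1)));((-1),(-4),((0),(-3)));((-1),(-1),((-1),(0)));((-1),(2),((0),(2)));((0),(-3),((0),(-2)));((0),(1),((1),(1)));((1),(-2),((1),(-2)));((1),(0),((2),(0)));((2),(-1),((2),(-1)))]);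
  (((0),(-1)),[((-4),(-1),((-3),(-1)));((-3),(-2),((-2),(-2)));((-3),(1),((-3),(2)));((-2),(-3),((-1),(-3)));((-2),(-1),((-2),(-1)));((-1),(-4),((0),(-3)));((-1),(1),((-1),(2)));((-1),(2),((0),(2)));((0),(-3),((1),(-2)));((0),(-1),((0),(-1)));((1),(-2),((1),(-1)));((1),(1),((2),(2)));((2),(-1),((2),(-1)))]);
  (((0),(0)),[((-4),(-1),((-3),(-1)));((-3),(-2),((-2),(-2)));((-3),(1),((-3),(2)));((-2),(-3),((-1),(-3)));((-2),(0),((-2),(1)));((-1),(-4),((0),(-3)));((-1),(-2),((-1),(-2)));((-1),(2),((0),(2)));((0),(-3),((0),(-2)));((0),(1),((1),(1)));((1),(-2),((1),(-2)));((1),(0),((2),(0)));((2),(-1),((2),(-1)))]);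
  (((0),(1)),[((-4),(-1),((-3),(-1)));((-3),(-2),((-2),(-2)));((-3),(1),((-3),(2)));((-2),(-3),((-1),(-3)));((-2),(0),((-2),(1)));((-1),(-4),((0),(-3)));((-1),(-1),((-1),(0)));((-1),(2),((0),(2)));((0),(-3),((1),(-2)));((0),(1),((0),(1)));((1),(-2),((2),(-1)));((1),(0),((1),(1)));((2),(-1),((2),(0)))]);
  (((0),(2)),[((-4),(-1),((-3),(-1)));((-3),(-2),((-2),(-2)));((-3),(1),((-3),(2)));((-2),(-3),((-1),(-3)));((-2),(0),((-2),(1)));((-1),(-4),((0),(-3)));((-1),(-1),((-1),(0)));((-1),(2),((0),(2)));((0),(-3),((1),(-2)));((0),(1),((0),(2)));((1),(-2),((2),(-1)));((1),(0),((1),(1)));((2),(-1),((2),(0)))]);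
  (((0),(3)),[((-4),(-1),((-3),(-1)));((-3),(-2),((-2),(-2)));((-3),(1),((-3),(2)));((-2),(-3),((-1),(-3)));((-2),(0),((-2),(1)));((-1),(-4),((0),(-3)));((-1),(-1),((-1),(0)));((-1),(2),((0),(3)));((0),(-3),((1),(-2)));((0),(1),((0),(2)));((1),(-2),((2),(-1)));((1),(0),((1),(1)));((2),(-1),((2),(0)))]);
  (((1),(-3)),[((-4),(-1),((-3),(-1)));((-3),(-2),((-2),(-2)));((-3),(1),((-3),(2)));((-2),(-3),((-1),(-3)));((-2),(0),((-2),(1)));((-1),(-4),((0),(-3)));((-1),(-1),((-1),(0)));((-1),(2),((0),(2)));((0),(-3),((1),(-3)));((0),(1),((1),(1)));((1),(-2),((1),(-2)));((1),(0),((2),(0)));((2),(-1),((2),(-1)))]);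
  (((1),(-2)),[((-4),(-1),((-3),(-1)));((-3),(-2),((-2),(-2)));((-3),(1),((-3),(2)));((-2),(-3),((-1),(-3)));((-2),(0),((-2),(1)));((-1),(-4),((0),(-3)));((-1),(-1),((-1),(0)));((-1),(2),((0),(2)));((0),(-3),((1),(-2)));((0),(1),((1),(1)));((1),(-2),((1),(-2)));((1),(0),((2),(0)));((2),(-1),((2),(-1)))]);
  (((1),(-1)),[((-4),(-1),((-3),(-1)));((-3),(-2),((-2),(-2)));((-3),(1),((-3),(2)));((-2),(-3),((-1),(-3)));((-2),(0),((-2),(1)));((-1),(-4),((0),(-3)));((-1),(-1),((-1),(0)));((-1),(2),((0),(2)));((0),(-3),((1),(-2)));((0),(1),((1),(1)));((1),(-2),((1),(-1)));((1),(0),((2),(0)));((2),(-1),((2),(-1)))]);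
  (((1),(0)),[((-4),(-1),((-3),(-1)));((-3),(-2),((-2),(-2)));((-3),(1),((-3),(2)));((-2),(-3),((-1),(-3)));((-2),(0),((-2),(1)));((-1),(-4),((0),(-3)));((-1),(-1),((-1),(0)));((-1),(2),((0),(2)));((0),(-3),((1),(-2)));((0),(1),((1),(1)));((1),(-2),((2),(-1)));((1),(0),((1),(0)));((2),(-1),((2),(0)))]);
  (((1),(1)),[((-4),(-1),((-3),(-1)));((-3),(-2),((-2),(-2)));((-3),(1),((-3),(2)));((-2),(-3),((-1),(-3)));((-2),(0),((-2),(1)));((-1),(-4),((0),(-3)));((-1),(-1),((-1),(0)));((-1),(2),((0),(2)));((0),(-3),((1),(-2)));((0),(1),((1),(1)));((1),(-2),((2),(-1)));((1),(0),((1),(1)));((2),(-1),((2),(0)))]);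
  (((1),(2)),[((-4),(-1),((-3),(-1)));((-3),(-2),((-2),(-2)));((-3),(1),((-3),(2)));((-2),(-3),((-1),(-3)));((-2),(0),((-2),(1)));((-1),(-4),((0),(-3)));((-1),(-1),((-1),(0)));((-1),(2),((0),(2)));((0),(-3),((1),(-2)));((0),(1),((1),(2)));((1),(-2),((2),(-1)));((1),(0),((1),(1)));((2),(-1),((2),(0)))]);
  (((2),(-2)),[((-4),(-1),((-3),(-1)));((-3),(-2),((-2),(-2)));((-3),(1),((-3),(2)));((-2),(-3),((-1),(-3)));((-2),(0),((-2),(1)));((-1),(-4),((0),(-3)));((-1),(-1),((-1),(0)));((-1),(2),((0),(2)));((0),(-3),((1),(-2)));((0),(1),((1),(1)));((1),(-2),((2),(-2)));((1),(0),((2),(0)));((2),(-1),((2),(-1)))]);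
  (((2),(-1)),[((-4),(-1),((-3),(-1)));((-3),(-2),((-2),(-2)));((-3),(1),((-3),(2)));((-2),(-3),((-1),(-3)));((-2),(0),((-2),(1)));((-1),(-4),((0),(-3)));((-1),(-1),((-1),(0)));((-1),(2),((0),(2)));((0),(-3),((1),(-2)));((0),(1),((1),(1)));((1),(-2),((2),(-1)));((1),(0),((2),(0)));((2),(-1),((2),(-1)))]);
  (((2),(0)),[((-4),(-1),((-3),(-1)));((-3),(-2),((-2),(-2)));((-3),(1),((-3),(2)));((-2),(-3),((-1),(-3)));((-2),(0),((-2),(1)));((-1),(-4),((0),(-3)));((-1),(-1),((-1),(0)));((-1),(2),((0),(2)));((0),(-3),((1),(-2)));((0),(1),((1),(1)));((1),(-2),((2),(-1)));((1),(0),((2),(0)));((2),(-1),((2),(0)))]);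
  (((2),(1)),[((-4),(-1),((-3),(-1)));((-3),(-2),((-2),(-2)));((-3),(1),((-3),(2)));((-2),(-3),((-1),(-3)));((-2),(0),((-2),(1)));((-1),(-4),((0),(-3)));((-1),(-1),((-1),(0)));((-1),(2),((0),(2)));((0),(-3),((1),(-2)));((0),(1),((1),(1)));((1),(-2),((2),(-1)));((1),(0),((2),(1)));((2),(-1),((2),(0)))]);
  (((3),(-1)),[((-4),(-1),((-3),(-1)));((-3),(-2),((-2),(-2)));((-3),(1),((-3),(2)));((-2),(-3),((-1),(-3)));((-2),(0),((-2),(1)));((-1),(-4),((0),(-3)));((-1),(-1),((-1),(0)));((-1),(2),((0),(2)));((0),(-3),((1),(-2)));((0),(1),((1),(1)));((1),(-2),((2),(-1)));((1),(0),((2),(0)));((2),(-1),((3),(-1)))]);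
  (((3),(0)),[((-4),(-1),((-3),(-1)));((-3),(-2),((-2),(-2)));((-3),(1),((-3),(2)));((-2),(-3),((-1),(-3)));((-2),(0),((-2),(1)));((-1),(-4),((0),(-3)));((-1),(-1),((-1),(0)));((-1),(2),((0),(2)));((0),(-3),((1),(-2)));((0),(1),((1),(1)));((1),(-2),((2),(-1)));((1),(0),((2),(0)));((2),(-1),((3),(0)))])].

Definition pairP_specs : list spec := [((0),(0),((0),(1)));((2),(0),((3),(0)));((3),(0),((3),(1)));((5),(0),((6),(0)))].

Definition pairZ_specs : list spec := [((0),(0),((1),(0)));((1),(0),((1),(1)));((3),(0),((4),(0)));((4),(0),((4),(1)))].

Definition pairM_specs : list spec := [((-1),(0),((-1),(0)));((1),(0),((2),(0)));((2),(0),((2),(1)));((4),(0),((5),(1)))].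

Definition capU_specs : list spec := [((0),(0),((0),(1)));((2),(0),((3),(1)))].

Definition capD_specs : list spec := [((0),(0),((0),(0)));((2),(0),((3),(0)))].
Definition ADz (n : Z) (c : cell) : Prop :=
  Z.max (Z.abs (fst c)) (Z.abs (fst c + 1)) + Z.max (Z.abs (snd c)) (Z.abs (snd c + 1)) <= n + 1.
Definition Stair (x y d m : Z) (p : cell) : Prop :=
  y <= snd p < y + 2*m /\ x + d*(snd p - y) <= fst p <= x + d*(snd p - y) + 5.
Definition CapU (x y : Z) (p : cell) : Prop :=
  (snd p = y /\ x <= fst p <= x+3) \/ (snd p = y+1 /\ x+1 <= fst p <= x+2).
Definition CapD (x y : Z) (p : cell) : Prop :=
  (snd p = y+1 /\ x <= fst p <= x+3) \/ (snd p = y /\ x+1 <= fst p <= x+2).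
Definition R3 (n : Z) (p : cell) : Prop := ADz (n+3) p /\ ~ ADz n (fst p - 3, snd p).
Definition ADl (n a b : Z) : Prop := (0 <= a -> 0 <= b -> a + b <= n - 1) /\ (a < 0 -> 0 <= b -> -a-1+b <= n-1)
  /\ (0 <= a -> b < 0 -> a - b - 1 <= n - 1) /\ (a < 0 -> b < 0 -> -a-b-2 <= n-1).
Lemma ADz_l n a b : ADz n (a,b) <-> ADl n a b.
Proof. unfold ADz, ADl; cbv [fst snd]. lia. Qed.

Lemma tile_empty : tileable (fun _ => False).
Proof. exists nil. split; [constructor|split]. - intro p; split; [tauto|intros [t [[] _]]].
  - intros i j p H; simpl in H; lia. Qed.

Definition pairb (d : Z) (p : cell) : bool :=
  (0 <=? snd p) && (snd p <? 2) && (d * snd p <=? fst p) && (fst p <=? d * snd p + 5).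
Definition capUb (p : cell) : bool :=
  ((snd p =? 0) && (0 <=? fst p) && (fst p <=? 3)) || ((snd p =? 1) && (1 <=? fst p) && (fst p <=? 2)).
Definition capDb (p : cell) : bool :=
  ((snd p =? 1) && (0 <=? fst p) && (fst p <=? 3)) || ((snd p =? 0) && (1 <=? fst p) && (fst p <=? 2)).

Lemma pair_tile0 d : d = 1 \/ d = 0 \/ d = -1 -> tileable (Stair 0 0 d 1).
Proof.
  intro Hd. apply (tile_ext (fun p => pairb d p = true)).
  { intros [a b]. unfold pairb, Stair. cbv [fst snd]. rewrite !andb_true_iff, !Z.leb_le, Z.ltb_lt.
    destruct Hd as [ -> | [ -> | -> ] ]; lia. }
  apply (check_sound _ (box (-3) (-1) 12 4)
    (if Z.eqb d 1 then pairP_specs else if Z.eqb d 0 then pairZ_specs else pairM_specs)).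
  - intros [a b] H. unfold pairb in H. cbv [fst snd] in H. rewrite !andb_true_iff, !Z.leb_le, Z.ltb_lt in H.
    apply in_box; cbv [fst snd]; destruct Hd as [ -> | [ -> | -> ] ]; lia.
  - destruct Hd as [ -> | [ -> | -> ] ]; vm_compute; reflexivity.
Qed.

Lemma capU_tile x y : tileable (CapU x y).
Proof.
  apply (tile_ext (fun p => capUb (shift x y p) = true)).
  { intros [a b]. unfold capUb, CapU, shift. cbv [fst snd].
    rewrite !orb_true_iff, !andb_true_iff, !Z.leb_le, !Z.eqb_eq. lia. }
  apply (tile_shift x y (fun p => capUb p = true)). apply (check_sound _ (box (-1) (-1) 6 4) capU_specs).
  - intros [a b] H. unfold capUb in H. cbv [fst snd] in H.
    rewrite !orb_true_iff, !andb_true_iff, !Z.leb_le, !Z.eqb_eq in H. apply in_box; cbv [fst snd]; lia.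
  - vm_compute; reflexivity.
Qed.

Lemma capD_tile x y : tileable (CapD x y).
Proof.
  apply (tile_ext (fun p => capDb (shift x y p) = true)).
  { intros [a b]. unfold capDb, CapD, shift. cbv [fst snd].
    rewrite !orb_true_iff, !andb_true_iff, !Z.leb_le, !Z.eqb_eq. lia. }
  apply (tile_shift x y (fun p => capDb p = true)). apply (check_sound _ (box (-1) (-1) 6 4) capD_specs).
  - intros [a b] H. unfold capDb in H. cbv [fst snd] in H.
    rewrite !orb_true_iff, !andb_true_iff, !Z.leb_le, !Z.eqb_eq in H. apply in_box; cbv [fst snd]; lia.
  - vm_compute; reflexivity.
Qed.

Lemma stair_tile x y d m : d = 1 \/ d = 0 \/ d = -1 -> 0 <= m -> tileable (Stair x y d m).
Proof.
  intros Hd Hm. rewrite <- (Z2Nat.id m Hm). induction (Z.to_nat m) as [|k IH].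
  - apply (tile_ext (fun _ => False)); [|apply tile_empty].
    intros [a b]; unfold Stair; cbv [fst snd]; lia.
  - apply (tile_ext (fun p => Stair x y d (Z.of_nat k) p \/ Stair (x + d * (2 * Z.of_nat k)) (y + 2 * Z.of_nat k) d 1 p)).
    + intros [a b]; unfold Stair; cbv [fst snd]. destruct Hd as [ -> | [ -> | -> ] ]; lia.
    + apply tile_union; [exact IH| |].
      * apply (tile_ext (fun p => Stair 0 0 d 1 (shift (x + d * (2 * Z.of_nat k)) (y + 2 * Z.of_nat k) p))).
        { intros [a b]; unfold Stair, shift; cbv [fst snd]. destruct Hd as [ -> | [ -> | -> ] ]; lia. }
        apply (tile_shift _ _ (Stair 0 0 d 1)), pair_tile0, Hd.
      * intros [a b]; unfold Stair; cbv [fst snd]. destruct Hd as [ -> | [ -> | -> ] ]; lia.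
Qed.
Definition pr (x : Z) : Z := Z.max x (-x-1).
Lemma ADz_pr n a b : ADz n (a,b) <-> pr a + pr b <= n - 1.
Proof. unfold ADz, pr; cbv [fst snd]. lia. Qed.
Lemma pr_pos x : 0 <= x -> pr x = x.
Proof. unfold pr; lia. Qed.
Lemma pr_neg x : x < 0 -> pr x = -x-1.
Proof. unfold pr; lia. Qed.
Ltac prs a b := destruct (Z_lt_le_dec a 0), (Z_lt_le_dec a 3), (Z_lt_le_dec b 0);
  repeat first [rewrite (pr_pos a) by lia | rewrite (pr_neg a) by lia | rewrite (pr_pos b) by lia
    | rewrite (pr_neg b) by lia | rewrite (pr_pos (a-3)) by lia | rewrite (pr_neg (a-3)) by lia].

Lemma odd_dec n m a b : n = 2*m-1 -> 1 <= m -> R3 n (a,b) <-> CapU (-2) (n+1) (a,b) \/ (CapD (-2) (-n-3) (a,b) \/ (Stair (-n-3) 0 1 m (a,b) \/ Stair (-3) (-n-1) (-1) m (a,b))).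
Proof. unfold R3. cbv [fst snd]. rewrite !ADz_pr. unfold CapU, CapD, Stair; cbv [fst snd]. intros.
  prs a b; lia. Qed.
Lemma even_dec n m a b : n = 2*m -> 1 <= m -> R3 n (a,b) <-> CapU (-2) (n+1) (a,b) \/ (CapD (-2) (-n-3) (a,b) \/ (Stair (-n-2) 1 1 m (a,b) \/ (Stair (-3) (-n-1) (-1) m (a,b) \/ Stair (-n-3) (-1) 0 1 (a,b)))).
Proof. unfold R3. cbv [fst snd]. rewrite !ADz_pr. unfold CapU, CapD, Stair; cbv [fst snd]. intros.
  prs a b; lia. Qed.

Lemma R3_tile n : 4 <= n -> tileable (R3 n).
Proof.
  intro Hn. destruct (Z.Even_or_Odd n) as [[m Hm]|[m Hm]].
  - apply (tile_ext (fun p => CapU (-2) (n+1) p \/ (CapD (-2) (-n-3) p \/ (Stair (-n-2) 1 1 m p \/ (Stair (-3) (-n-1) (-1) m p \/ Stair (-n-3) (-1) 0 1 p))))).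
    { intros [a b]. symmetry. apply even_dec; lia. }
    repeat (apply tile_union; [first [apply capU_tile | apply capD_tile | apply stair_tile; lia] | |
      intros [a b]; unfold CapU, CapD, Stair; cbv [fst snd]; lia]); apply stair_tile; lia.
  - apply (tile_ext (fun p => CapU (-2) (n+1) p \/ (CapD (-2) (-n-3) p \/ (Stair (-n-3) 0 1 (m+1) p \/ Stair (-3) (-n-1) (-1) (m+1) p)))).
    { intros [a b]. symmetry. apply odd_dec; lia. }
    repeat (apply tile_union; [first [apply capU_tile | apply capD_tile | apply stair_tile; lia] | |
      intros [a b]; unfold CapU, CapD, Stair; cbv [fst snd]; lia]); apply stair_tile; lia.
Qed.
Definition Rt (u v n : Z) (p : cell) : Prop := ADz (n+3) p /\ ~ ADz n (fst p - u, snd p - v).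

Lemma Rt_all n : 4 <= n -> tileable (Rt 3 0 n) /\ tileable (Rt 0 3 n) /\ tileable (Rt (-3) 0 n) /\ tileable (Rt 0 (-3) n).
Proof.
  intro Hn.
  assert (H1 : tileable (Rt 3 0 n)).
  { apply (tile_ext (R3 n)); [|apply R3_tile, Hn]. intros [a b]. unfold Rt, R3; cbv [fst snd].
    rewrite Z.sub_0_r. tauto. }
  assert (H2 : tileable (Rt 0 3 n)).
  { apply (tile_ext (fun p => Rt 3 0 n (rinv p))); [|apply tile_rinv, H1].
    intros [a b]. unfold Rt, rinv; cbv [fst snd]. rewrite !ADz_pr. unfold pr. lia. }
  assert (H3 : tileable (Rt (-3) 0 n)).
  { apply (tile_ext (fun p => Rt 0 3 n (rinv p))); [|apply tile_rinv, H2].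
    intros [a b]. unfold Rt, rinv; cbv [fst snd]. rewrite !ADz_pr. unfold pr. lia. }
  assert (H4 : tileable (Rt 0 (-3) n)).
  { apply (tile_ext (fun p => Rt (-3) 0 n (rinv p))); [|apply tile_rinv, H3].
    intros [a b]. unfold Rt, rinv; cbv [fst snd]. rewrite !ADz_pr. unfold pr. lia. }
  auto.
Qed.

Lemma cover n a b : 4 <= n -> ADz (n+3) (a,b) ->
  ADz n (a - 3, b - 0) \/ ADz n (a - -3, b - 0) \/ ADz n (a - 0, b - 3) \/ ADz n (a - 0, b - -3).
Proof. rewrite !ADz_pr. unfold pr. lia. Qed.

Lemma step_gen n u v c :
  ADz n (fst c - u, snd c - v) ->
  (forall q, ADz n q -> tileable (fun p => ADz n p /\ p <> q)) ->
  tileable (Rt u v n) ->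
  (forall p, ADz n (fst p - u, snd p - v) -> ADz (n+3) p) ->
  tileable (fun p => ADz (n+3) p /\ p <> c).
Proof.
  intros Hc IH HR Hinc.
  apply (tile_ext (fun p => (ADz n (shift u v p) /\ shift u v p <> shift u v c) \/ Rt u v n p)).
  - intros p. unfold Rt. split.
    + intros [[H1 H2]|[H1 H2]].
      * split; [apply Hinc, H1|]. intro E; subst; tauto.
      * split; [exact H1|]. intro E; subst; tauto.
    + intros [H1 H2]. destruct (Z_le_gt_dec (Z.max (Z.abs (fst p - u)) (Z.abs (fst p - u + 1)) + Z.max (Z.abs (snd p - v)) (Z.abs (snd p - v + 1))) (n + 1)) as [H|H].
      * left. split; [exact H|]. destruct p as [a b], c as [c1 c2]. unfold shift; cbv [fst snd].
        rewrite pair_neq. intros [E1 E2]. apply H2. f_equal; lia.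
      * right. split; [exact H1|]. intro H'. exact (Zle_not_gt _ _ H' H).
  - apply tile_union.
    + apply (tile_shift u v (fun q => ADz n q /\ q <> shift u v c)). apply IH, Hc.
    + exact HR.
    + intros p [H1 _] [_ H2]. exact (H2 H1).
Qed.

Lemma step n : 4 <= n ->
  (forall q, ADz n q -> tileable (fun p => ADz n p /\ p <> q)) ->
  forall c, ADz (n+3) c -> tileable (fun p => ADz (n+3) p /\ p <> c).
Proof.
  intros Hn IH [a b] Hc. destruct (Rt_all n Hn) as (T1 & T2 & T3 & T4).
  destruct (cover n a b Hn Hc) as [H|[H|[H|H]]]; (eapply step_gen; [exact H|exact IH|eassumption|]);
  intros [x y]; cbv [fst snd]; rewrite !ADz_pr; unfold pr; lia.
Qed.
Definition ADb (n : Z) (c : cell) : bool :=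
  Z.max (Z.abs (fst c)) (Z.abs (fst c + 1)) + Z.max (Z.abs (snd c)) (Z.abs (snd c + 1)) <=? n + 1.
Lemma ADb_spec n c : ADb n c = true <-> ADz n c.
Proof. unfold ADb, ADz. apply Z.leb_le. Qed.

Definition lookup (c : cell) (tab : list (cell * list spec)) : list spec :=
  match find (fun e => ceqb (fst e) c) tab with Some e => snd e | None => nil end.

Definition checkall (n : Z) (w : nat) (tab : list (cell * list spec)) : bool :=
  forallb (fun c => negb (ADb n c) ||
     check (fun p => ADb n p && negb (ceqb p c)) (box (-n-1) (-n-1) w w) (lookup c tab))
    (box (-n-1) (-n-1) w w).

Lemma base_gen n w tab : 0 <= n -> Z.of_nat w = 2*n+2 -> checkall n w tab = true ->
  forall c, ADz n c -> tileable (fun p => ADz n p /\ p <> c).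
Proof.
  intros Hn Hw Hch c Hc.
  assert (HB : forall p, ADz n p -> In p (box (-n-1) (-n-1) w w)).
  { intros [a b] H. rewrite ADz_pr in H. unfold pr in H. apply in_box; cbv [fst snd]; lia. }
  unfold checkall in Hch. rewrite forallb_forall in Hch. specialize (Hch c (HB c Hc)).
  apply ADb_spec in Hc. rewrite Hc in Hch. simpl in Hch.
  apply (tile_ext (fun p => (ADb n p && negb (ceqb p c)) = true)).
  - intro p. rewrite andb_true_iff, ADb_spec, negb_true_iff, <- not_true_iff_false, ceqb_spec. tauto.
  - eapply check_sound; [|exact Hch].
    intros p H. apply andb_true_iff in H as [H _]. apply HB, ADb_spec, H.
Qed.

Lemma base1 : forall c, ADz 1 c -> tileable (fun p => ADz 1 p /\ p <> c).
Proof. apply (base_gen 1 4 table1); [lia|reflexivity|vm_compute; reflexivity]. Qed.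
Lemma base4 : forall c, ADz 4 c -> tileable (fun p => ADz 4 p /\ p <> c).
Proof. apply (base_gen 4 10 table4); [lia|reflexivity|vm_compute; reflexivity]. Qed.

Lemma mainZ : forall k : nat, (1 <= k)%nat -> forall c, ADz (Z.of_nat (3*k-2)) c ->
  tileable (fun p => ADz (Z.of_nat (3*k-2)) p /\ p <> c).
Proof.
  induction k as [|k IH]; intros Hk; [lia|].
  destruct k as [|k]; [apply base1|].
  destruct k as [|k]; [apply base4|].
  replace (Z.of_nat (3 * S (S (S k)) - 2)) with (Z.of_nat (3 * S (S k) - 2) + 3) by lia.
  apply step; [lia|]. apply IH. lia.
Qed.

Theorem corollary4 :
  forall (k : nat), (1 <= k)%nat ->
  forall c : cell, in_AD (3 * k - 2) c ->
    L_tromino_partition (fun p => in_AD (3 * k - 2) p /\ p <> c).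
Proof. exact mainZ. Qed.
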